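(* Let $L\ge2$, $m\in\mathbb{R}$, $d_0=d_L=1$, $d_1,\dots,d_{L-1}\ge1$, and consider $$\mathcal{L}(\mathbf{w}) = (m-\mathbf{w}_L\mathbf{W}_{L-1}\cdots\mathbf{W}_2\mathbf{w}_1)^2,$$ where $\mathbf{w}_L\in\mathbb{R}^{1\times d_{L-1}}$, $\mathbf{w}_1\in\mathbb{R}^{d_1\times 1}$, $\mathbf{W}_i\in\mathbb{R}^{d_i\times d_{i-1}}$ for $2\le i\le L-1$, and $\mathbf{w}\in\mathbb{R}^N$ is the vector of all parameters, $N=\sum_{i=1}^L d_id_{i-1}$. Let $\mathbf{w}^*=(\mathbf{W}_1^*,\dots,\mathbf{W}_L^* )$ be any global minimizer, i.e. $\prod_{j=1}^L\mathbf{W}_j^*=m$ (writing $\mathbf{W}_1=\mathbf{w}_1$, $\mathbf{W}_L=\mathbf{w}_L$). Then $$\lambda_{\max}(\nabla^2\mathcal{L}(\mathbf{w}^* )) = 2\sum_{i=1}^L \sigma_{\max}\Big(\prod_{j=i+1}^L\mathbf{W}_j^*\Big)^2\,\sigma_{\max}\Big(\prod_{j=1}^{i-1}\mathbf{W}_j^*\Big)^2.$$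
   Context: For matrices $\mathbf{W}_j\in\mathbb{R}^{d_j\times d_{j-1}}$, $\prod_{j=n}^m\mathbf{W}_j := \mathbf{W}_m\mathbf{W}_{m-1}\cdots\mathbf{W}_n$ if $n\le m$, and the identity matrix of the appropriate size if $n>m$. $\sigma_{\max}$ denotes the largest singular value (spectral norm). $\nabla^2\mathcal{L}(\mathbf{w}^* )$ is the $N\times N$ Hessian of $\mathcal{L}$ with respect to $\mathbf{w}$, and $\lambda_{\max}$ its largest eigenvalue. *)

(* Defs.v *)
From mathcomp Require Import all_boot all_order all_algebra.
From mathcomp Require Import all_classical all_reals all_analysis.
Set Implicit Arguments. Unset Strict Implicit. Unset Printing Implicit Defensive.
Import Order.TTheory GRing.Theory Num.Theory.
Local Open Scope ring_scope.

Section DeepLinear.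
Variable R : realType.

Definition lambda_max n (A : 'M[R]_n) : R := sup [set a : R | eigenvalue A a].

Definition sigma_max m n (A : 'M[R]_(m, n)) : R := Num.sqrt (lambda_max (A^T *m A)).

Variable d : nat -> nat.

(* Layers are 0-indexed here: W i : 'M_(d (i+1), d i) is the paper's W_{i+1}.
   prodW W n k = W_(n+k-1) *m ... *m W_n  (k factors; identity if k = 0),
   i.e. the paper's  prod_{j=n+1}^{n+k} W_j. *)
Fixpoint prodW (W : forall i : nat, 'M[R]_(d i.+1, d i)) (n k : nat)
  : 'M[R]_(d (k + n), d n) :=
  match k with
  | 0 => 1%:M
  | k'.+1 => W (k' + n) *m prodW W n k'
  end.

Variable L : nat.

Definition Npar : nat := (\sum_(i < L) d i.+1 * d i)%N.

(* Unflattening of the parameter vector w in R^N into layers: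
   the block of w indexed by i is vec of the paper's W_{i+1}. *)
Definition layers (w : 'rV[R]_Npar) (i : nat) : 'M[R]_(d i.+1, d i) :=
  (if (i < L)%N as b return (i < L)%N = b -> 'M[R]_(d i.+1, d i)
   then fun h => @vec_mx R (d i.+1) (d i)
                   (@submxrow R L (fun j : 'I_L => (d j.+1 * d j)%N) 1
                      w (Ordinal h))
   else fun _ => 0) erefl.

(* Network output  W_L ... W_1 ; when d 0 = d L = 1 this 1x1 matrix has a
   single entry, which the double sum extracts. *)
Definition net_out (W : forall i : nat, 'M[R]_(d i.+1, d i)) : R :=
  \sum_(a < d (L + 0)) \sum_(b < d 0) prodW W 0 L a b.

Definition loss (m : R) (w : 'rV[R]_Npar) : R := (m - net_out (layers w)) ^+ 2.

End DeepLinear.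

Definition ebasis (R : realType) N (i : 'I_N) : 'rV[R]_N := delta_mx 0 i.

Definition partial (R : realType) N (f : 'rV[R]_N -> R) (j : 'I_N) (w : 'rV[R]_N) : R :=
  derive1 (fun t : R => f (w + t *: ebasis R j)) 0.

Definition hessian (R : realType) N (f : 'rV[R]_N -> R) (w : 'rV[R]_N) : 'M[R]_N :=
  \matrix_(i, j) partial (partial f j) i w.

(* Main.v *)
Require Import Defs.
From mathcomp Require Import all_boot all_order all_algebra.
From mathcomp Require Import all_classical all_reals all_analysis.
From mathcomp Require Import ring lra zify.
Import Order.TTheory GRing.Theory Num.Theory.
Local Open Scope ring_scope.


Lemma derq (R : realType) (a b c e : R) :
  derive1 (fun t : R => (a + b * t) * (c + e * t)) 0 = a * e + b * c.
Proof.
have Hf : forall a b : R, is_derive (0:R) 1 (fun t : R => a + b * t) b.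
  move=> a' b'.
  have H1 := @is_deriveZ R R R id b' 0 1 1 (is_derive_id _ _).
  have := @is_deriveD R R R (cst a') _ 0 1 0 _ _ H1.
  by rewrite add0r /GRing.scale /= mulr1; apply; apply: is_derive_cst.
have := @is_deriveM R R (fun t => a + b * t) (fun t => c + e * t) 0 1 b e (Hf a b) (Hf c e).
rewrite !mulr0 !addr0 => H.
have E := derive1E (fun t : R => (a + b * t) * (c + e * t)) 0.
rewrite {}E; have := @derive_val _ _ _ _ _ _ _ H; move=> ->.
by congr (_ + _); rewrite mulrC.
Qed.


Lemma sup_max (R : realType) (E : set R) (M : R) :
  E M -> (forall x, E x -> x <= M) -> sup E = M.
Proof.
move=> EM ub; apply/le_anti/andP; split.
  by apply: ge_sup; [exists M | move=> x /ub].
by apply: ub_le_sup => //; exists M => x /ub.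
Qed.

Lemma rank1_lmax (R : realType) n (u : 'rV[R]_n) (s : R) : (0 < n)%N -> 0 <= s ->
  lambda_max (\matrix_(i, j) (s * u 0 i * u 0 j)) = s * \sum_i u 0 i ^+ 2.
Proof.
move=> n0 s0; set M := \matrix_(i, j) _.
have Mv : forall v : 'rV[R]_n, v *m M = (s * \sum_i v 0 i * u 0 i) *: u.
  move=> v; apply/rowP => j; rewrite !mxE [s * _]mulrC -mulrA mulr_suml.
  by apply: eq_bigr => i _; rewrite !mxE; ring.
have S0 : 0 <= \sum_i u 0 i ^+ 2 by apply: sumr_ge0 => i _; exact: sqr_ge0.
apply: sup_max.
- apply/eigenvalueP; have [u0|un0] := eqVneq u 0.
    have -> : \sum_i u 0 i ^+ 2 = 0 by apply: big1 => i _; rewrite u0 mxE expr0n.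
    exists (const_mx 1); first by rewrite Mv u0 !scaler0 mulr0 scale0r.
    apply/negP => /eqP/rowP/(_ (Ordinal n0)); rewrite !mxE => /eqP; by rewrite oner_eq0.
  by exists u => //; rewrite Mv; congr (_ *: _); congr (_ * _); apply: eq_bigr => i _; rewrite expr2.
- move=> a /eigenvalueP [v]; rewrite Mv => hv vn0.
  set t := \sum_i v 0 i * u 0 i in hv.
  have [t0|tn0] := eqVneq t 0.
    move: hv; rewrite t0 mulr0 scale0r => /esym/eqP; rewrite scaler_eq0 (negbTE vn0) orbF => /eqP ->.
    exact: mulr_ge0.
  have : a * t = s * t * \sum_i u 0 i ^+ 2.
    rewrite /t mulr_sumr mulr_sumr.
    apply: eq_bigr => i _.
    have := congr1 (fun w : 'rV[R]_n => w 0 i) hv; rewrite !mxE => hi.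
    rewrite mulrA -hi /t; ring.
  move=> h; have -> : a = s * \sum_i u 0 i ^+ 2 by apply: (mulIf tn0); rewrite h; ring.
  by [].
Qed.

Lemma sigma_row (R : realType) p n (A : 'M[R]_(p, n)) : p = 1%N -> (0 < n)%N ->
  sigma_max A ^+ 2 = \sum_a (\sum_x A x a) ^+ 2.
Proof.
move=> p1 n0; subst p; rewrite /sigma_max.
have -> : A^T *m A = \matrix_(i, j) (1 * A 0 i * A 0 j).
  by apply/matrixP => i j; rewrite !mxE big_ord1 !mxE mul1r.
rewrite rank1_lmax // mul1r sqr_sqrtr; last by apply: sumr_ge0 => i _; exact: sqr_ge0.
by apply: eq_bigr => a _; rewrite big_ord1.
Qed.

Lemma sigma_col (R : realType) m q (B : 'M[R]_(m, q)) : q = 1%N ->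
  sigma_max B ^+ 2 = \sum_b (\sum_y B b y) ^+ 2.
Proof.
move=> q1; subst q; rewrite /sigma_max.
set c := \sum_b _.
have c0 : 0 <= c by apply: sumr_ge0 => i _; exact: sqr_ge0.
have E : forall i j : 'I_1, (B^T *m B) i j = c.
  move=> i j; rewrite !ord1 !mxE /c; apply: eq_bigr => b _; rewrite !mxE big_ord1 expr2.
  by [].
suff -> : lambda_max (B^T *m B) = c by rewrite sqr_sqrtr.
apply: sup_max.
- apply/eigenvalueP; exists (const_mx 1).
    by apply/rowP => j; rewrite [LHS]mxE big_ord1 E !mxE mul1r mulr1.
  by apply/negP => /eqP/rowP/(_ ord0); rewrite !mxE => /eqP; rewrite oner_eq0.
- move=> a /eigenvalueP [v hv vn0].
  have := congr1 (fun w : 'rV[R]_1 => w 0 0) hv; rewrite [LHS]mxE big_ord1 E mxE => h.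
  have v0 : v 0 0 != 0.
    apply: contra vn0 => /eqP h0; apply/eqP/rowP => j; by rewrite ord1 h0 mxE.
  suff -> : a = c by [].
  by apply: (mulfI v0); rewrite h mulrC.
Qed.


Section P.
Variable R : realType.
Variable d : nat -> nat.
Variable L : nat.
Notation Lay := (forall i : nat, 'M[R]_(d i.+1, d i)).

Fixpoint dprod (W V : Lay) (n k : nat) : 'M[R]_(d (k + n), d n) :=
  match k with
  | 0 => 0
  | k'.+1 => W (k' + n) *m dprod W V n k' + V (k' + n) *m prodW W n k'
  end.

Lemma prodW_ext (W1 W2 : Lay) n k : (forall i, W1 i = W2 i) -> prodW W1 n k = prodW W2 n k.
Proof. by move=> h; elim: k => //= k ->; rewrite h. Qed.

Lemma dprod0 (W V : Lay) n k : (forall i, (i < k + n)%N -> V i = 0) -> dprod W V n k = 0.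
Proof.
elim: k => //= k IH h.
by rewrite IH ?h ?mulmx0 ?mul0mx ?addr0 // => i hi; apply: h; lia.
Qed.

Lemma prodW_lin (W V : Lay) j t n k : (forall i, i != j -> V i = 0) ->
  prodW (fun i => W i + t *: V i) n k = prodW W n k + t *: dprod W V n k.
Proof.
move=> hV; elim: k => /= [|k IH]; first by rewrite scaler0 addr0.
rewrite IH mulmxDl mulmxDr mulmxDr -!scalemxAl -!scalemxAr scalerDr.
have -> : V (k + n) *m dprod W V n k = 0.
  have [e|ne] := eqVneq (k + n)%N j.
    rewrite dprod0 ?mulmx0 // => i hi; apply: hV; apply/eqP; lia.
  by rewrite hV // mul0mx.
by rewrite !scaler0 addr0 addrA.
Qed.

Lemma V_idx (V : Lay) i i' x y x' y' : i = i' -> val x = val x' -> val y = val y' ->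
  V i x y = V i' x' y'.
Proof. by move=> e; subst i' => /val_inj -> /val_inj ->. Qed.

Lemma prodW_idx (W : Lay) n k k' x y x' : k = k' -> val x = val x' ->
  prodW W n k x y = prodW W n k' x' y.
Proof. by move=> e; subst k' => /val_inj ->. Qed.

Lemma dprod_idx (W V : Lay) n k k' x y x' : k = k' -> val x = val x' ->
  dprod W V n k x y = dprod W V n k' x' y.
Proof. by move=> e; subst k' => /val_inj ->. Qed.

Lemma sum_valeq p q (F : 'I_p -> R) (G : 'I_q -> R) : p = q ->
  (forall i j, val i = val j -> F i = G j) -> \sum_i F i = \sum_i G i.
Proof. by move=> e; subst q => h; apply: eq_bigr => i _; apply: h. Qed.

Lemma dprod_single (W V : Lay) j : (forall i, i != j -> V i = 0) ->
  forall r (x : 'I_(d (r + j.+1 + 0))) y (x' : 'I_(d (r + j.+1))), val x = val x' ->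
  dprod W V 0 (r + j.+1) x y =
  \sum_a \sum_b prodW W j.+1 r x' a * V j a b
                 * prodW W 0 j (cast_ord (congr1 d (esym (addn0 j))) b) y.
Proof.
move=> hV; elim=> [|r IH] x y x' hx.
  rewrite /= dprod0 ?mulmx0 ?add0r; last by move=> i hi; apply: hV; apply/eqP; lia.
  rewrite (bigD1 x') //= [X in _ = _ + X]big1; last first.
    move=> a /negbTE ha; apply: big1 => b _; rewrite mxE eq_sym ha mulr0n !mul0r //.
  rewrite mxE [RHS]addr0.
  apply: sum_valeq; first by rewrite ?addr0 ?addn0.
  move=> z b hz; rewrite mxE eqxx /= mul1r.
  congr (_ * _); last by apply: prodW_idx.
  by apply: V_idx => //; rewrite ?addr0 ?addn0.
rewrite /= hV; last by apply/eqP; lia.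
rewrite mul0mx addr0 mxE.
under [RHS]eq_bigr do under eq_bigr do rewrite mxE mulr_suml mulr_suml.
under [RHS]eq_bigr do rewrite exchange_big /=.
rewrite exchange_big /=.
apply: sum_valeq; first by rewrite ?addr0 ?addn0.
move=> z z' hz.
rewrite (IH _ _ z') // mulr_sumr; apply: eq_bigr => a _; rewrite mulr_sumr.
apply: eq_bigr => b _.
have -> : W ((r + j.+1)%N + 0)%R x z = W (r + j.+1)%N x' z' by apply: V_idx => //=; rewrite ?addr0 ?addn0.
ring.
Qed.
Notation N := (Npar d L).
Notation pp := (fun j : 'I_L => (d j.+1 * d j)%N).

Lemma layersE (w : 'rV[R]_N) i (h : (i < L)%N) :
  layers w i = vec_mx (submxrow (q_ := pp) w (Ordinal h)).
Proof.
rewrite /layers; move: (erefl (i < L)%N); rewrite {2 3}h => e.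
by rewrite (bool_irrelevance e h).
Qed.

Lemma layersN (w : 'rV[R]_N) i : ~~ (i < L)%N -> layers w i = 0.
Proof.
move=> /negbTE h; rewrite /layers; move: (erefl (i < L)%N); by rewrite {2 3}h.
Qed.

Lemma layers_lin (w v : 'rV[R]_N) t i :
  layers (w + t *: v) i = layers w i + t *: layers v i.
Proof.
have [h|h] := boolP (i < L)%N; last by rewrite !layersN // scaler0 addr0.
by rewrite !layersE; apply/matrixP => a b; rewrite !mxE.
Qed.

Lemma layers_e_other (k : 'I_N) (i : nat) : i != tagnat.sig1 (p_ := pp) k :> nat ->
  layers (ebasis R k) i = 0.
Proof.
move=> hi; have [h|h] := boolP (i < L)%N; last by rewrite layersN.
rewrite layersE; apply/matrixP => a b; rewrite !mxE.
rewrite eqxx andTb -[X in _ == X](tagnat.sig2K (p_:=pp)) -val_eqE tagnat.eq_Rank.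
rewrite -val_eqE /= (_ : _ && _ = false) //; apply/negbTE; apply: contra hi => /andP [/eqP e _]; apply/eqP; exact: e.
Qed.

Lemma layers_e_self (i : 'I_L) (a : 'I_(d i.+1)) (b : 'I_(d i)) :
  layers (ebasis R (tagnat.Rank (p_ := pp) i (mxvec_index a b))) i = delta_mx a b.
Proof.
rewrite (layersE _ _ (ltn_ord i)) -vec_mx_delta; congr vec_mx.
apply/rowP => c; rewrite !mxE eqxx /= -!val_eqE tagnat.eq_Rank /=.
by rewrite (_ : Ordinal _ == i) // -val_eqE.
Qed.

Local Notation F w := (net_out L (layers w)).
Definition Fd (W V : Lay) : R := \sum_(x < d (L + 0)%N) \sum_(y < d 0%N) dprod W V 0 L x y.

Lemma F_line (w : 'rV[R]_N) (k : 'I_N) t :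
  F (w + t *: ebasis R k) = F w + t * Fd (layers w) (layers (ebasis R k)).
Proof.
rewrite /net_out (prodW_ext _ (fun i => layers w i + t *: layers (ebasis R k) i));
  last by move=> i; exact: layers_lin.
rewrite (prodW_lin _ _ (tagnat.sig1 (p_ := pp) k)); last first.
  by move=> i hi; apply: layers_e_other.
rewrite /Fd mulr_sumr -big_split; apply: eq_bigr => x _.
rewrite mulr_sumr -big_split; apply: eq_bigr => y _.
by rewrite !mxE.
Qed.

Definition phi (k : 'I_N) (w : 'rV[R]_N) : R := F (w + ebasis R k) - F w.

Lemma phiE w k : phi k w = Fd (layers w) (layers (ebasis R k)).
Proof. rewrite /phi -{1}[ebasis R k]scale1r F_line mul1r; ring. Qed.

Lemma F_line' w k t : F (w + t *: ebasis R k) = F w + phi k w * t.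
Proof. by rewrite F_line phiE mulrC. Qed.

Lemma partial1 m k w : partial (loss m) k w = (F w - m) * (2 * phi k w).
Proof.
rewrite /partial.
have -> : (fun t => loss m (w + t *: ebasis R k)) =
   (fun t => ((m - F w) + (- phi k w) * t) * ((m - F w) + (- phi k w) * t)).
  by apply: funext => t; rewrite /loss F_line' expr2; congr (_ * _); ring.
rewrite derq; ring.
Qed.

Lemma partial2 m k i w : partial (partial (loss m) k) i w =
  (F w - m) * (2 * (phi i (w + ebasis R k) - phi i w)) + phi i w * (2 * phi k w).
Proof.
rewrite {1}/partial.
have -> : (fun t => partial (loss m) k (w + t *: ebasis R i)) =
   (fun t => ((F w - m) + phi i w * t) *
      (2 * phi k w + (2 * (phi i (w + ebasis R k) - phi i w)) * t)).
  apply: funext => t; rewrite partial1 F_line'.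
  have -> : phi k (w + t *: ebasis R i) = phi k w + (phi i (w + ebasis R k) - phi i w) * t.
    rewrite [in LHS]/phi addrAC !F_line' [phi k w]/phi; ring.
  ring.
by rewrite derq.
Qed.

Lemma hessE m (ws : 'rV[R]_N) : F ws = m ->
  hessian (loss m) ws = \matrix_(i, j) (2 * (\row_k phi k ws) 0 i * (\row_k phi k ws) 0 j).
Proof.
move=> H; apply/matrixP => i j; rewrite !mxE partial2 H subrr mul0r add0r; ring.
Qed.

Lemma lmax_hess m (ws : 'rV[R]_N) : F ws = m -> (0 < N)%N ->
  lambda_max (hessian (loss m) ws) = 2 * \sum_k phi k ws ^+ 2.
Proof.
move=> H N0; rewrite hessE // rank1_lmax //; 
by congr (_ * _); apply: eq_bigr => k _; rewrite mxE.
Qed.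

Lemma sumN (f : 'I_N -> R) : \sum_k f k =
  \sum_(i : 'I_L) \sum_(a < d i.+1) \sum_(b < d i) f (tagnat.Rank (p_ := pp) i (mxvec_index a b)).
Proof.
transitivity (\sum_(i : 'I_L) \sum_(c : 'I_(pp i)) f (tagnat.Rank (p_ := pp) i c)).
  rewrite sig_big_dep /= (reindex _ tagnat.sig_bij_on) /=.
  by apply: eq_bigr => k _; rewrite tagnat.sig2K.
apply: eq_bigr => i _.
rewrite pair_big /= (reindex _ (curry_mxvec_bij _ _)) /=.
by apply: eq_bigr => -[a b].
Qed.

Lemma phi_rank (ws : 'rV[R]_N) (i : 'I_L) (a : 'I_(d i.+1)) (b : 'I_(d i)) :
  phi (tagnat.Rank (p_ := pp) i (mxvec_index a b)) ws =
  (\sum_(x < d (L - i.+1 + i.+1)%N) prodW (layers ws) i.+1 (L - i.+1) x a) *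
  (\sum_(y < d 0%N) prodW (layers ws) 0 i (cast_ord (congr1 d (esym (addn0 i))) b) y).
Proof.
rewrite phiE /Fd.
set W := layers ws; set V := layers (ebasis R _).
have hV : forall j : nat, j != i :> nat -> V j = 0.
  move=> j hj; apply: layers_e_other; by rewrite tagnat.Rank1K.
have hVi : V i = delta_mx a b by exact: layers_e_self.
have hL : (L - i.+1 + i.+1)%N = L by rewrite subnK.
rewrite mulr_suml.
apply: sum_valeq; first by rewrite hL ?addn0 ?addr0.
move=> x x' hx; rewrite mulr_sumr; apply: eq_bigr => y _.
have e1 : d (L + 0)%N = d (L - i.+1 + i.+1 + 0)%N by rewrite hL.
have eL : L = (L - i.+1 + i.+1)%N by rewrite hL.
rewrite (dprod_idx W V 0 L _ x y (cast_ord e1 x) eL erefl).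
rewrite (dprod_single W V i hV (L - i.+1) (cast_ord e1 x) y x') //.
rewrite (bigD1 a) //= [X in X + _](bigD1 b) //= big1 ?addr0; last first.
  by move=> b' /negbTE hb; rewrite hVi mxE eqxx hb /=; ring.
rewrite big1 ?addr0; last first.
  move=> a' /negbTE ha; apply: big1 => b' _; rewrite hVi mxE ha /=; ring.
by rewrite hVi mxE !eqxx /=; ring.
Qed.
End P.

Theorem theorem1 (R : realType) (L : nat) (d : nat -> nat) (m : R)
    (wstar : 'rV[R]_(Npar d L)) :
  (2 <= L)%N ->
  d 0%N = 1%N -> d L = 1%N ->
  (forall i, (0 < i < L)%N -> (1 <= d i)%N) ->
  net_out L (layers wstar) = m ->
  lambda_max (hessian (loss m) wstar) =
  2 * \sum_(i < L)
        sigma_max (prodW (layers wstar) i.+1 (L - i.+1)) ^+ 2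
        * sigma_max (prodW (layers wstar) 0 i) ^+ 2.
Proof.
move=> L2 d0 dL dpos Hm.
have N0 : (0 < Npar d L)%N.
  case: L L2 dL dpos wstar Hm => [//|L'] L2 dL dpos _ _.
  rewrite /Npar big_ord_recl /= d0 muln1.
  have := dpos 1%N; lia.
rewrite (lmax_hess _ _ _ _ _ Hm N0); congr (2 * _).
rewrite sumN; apply: eq_bigr => i _.
have pA : d (L - i.+1 + i.+1)%N = 1%N by rewrite subnK // dL.
have nA : (0 < d i.+1)%N.
  have [hi|hi] := ltnP i.+1 L; first by apply: dpos; rewrite hi.
  have -> : i.+1 = L by apply/eqP; rewrite eqn_leq hi ltn_ord.
  by rewrite dL.
rewrite (sigma_row _ _ _ _ pA nA) (sigma_col _ _ _ _ d0).
rewrite mulr_suml; apply: eq_bigr => a _; rewrite mulr_sumr.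
apply: sum_valeq; first by rewrite ?addn0 ?addr0.
move=> b b' hb; rewrite phi_rank exprMn; congr (_ * _); congr (_ ^+ 2).
by apply: eq_bigr => y _; congr (prodW _ _ _ _ y); apply: val_inj.
Qed.
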